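(* Let $\mathrm{k}$ be an infinite field, $\mathcal{A}$ a unital associative $\mathrm{k}$-algebra satisfying $\mathbf{H}_{\mathrm{s}}$, $V$ a fixed finite-dimensional $\mathrm{k}$-subspace of $\mathcal{A}$ with $V\cap U(\mathcal{A})\neq\emptyset$, and $0<\lambda\leq1$ real. Then: (1) There exists a unique atom $\mathcal{H}_\lambda$ of $V$ containing $1$. (2) $\mathcal{H}_\lambda$ is a subalgebra of $\mathcal{A}$ containing $\mathcal{H}_l(V):=\{h\in\mathcal{A}\mid hV\subseteq V\}$. (3) The atoms of $V$ which intersect $U(\mathcal{A})$ are exactly the subspaces $x\mathcal{H}_\lambda$ with $x\in U(\mathcal{A})$. (4) For every finite-dimensional $\mathrm{k}$-subspace $W$ of $\mathcal{A}$ with $W\cap U(\mathcal{A})\neq\emptyset$, $\dim_{\mathrm{k}}(\mathrm{k}\langle WV\rangle)\geq\lambda\dim_{\mathrm{k}}(W)+\dim_{\mathrm{k}}(V)-\lambda\dim_{\mathrm{k}}(\mathcal{H}_\lambda)$.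
   Context: Algebras are unital associative, subalgebras contain $1$; $U(\mathcal{A})$ is the group of invertible elements; $\mathrm{k}\langle S\rangle$ is linear span, $\dim_{\mathrm{k}}(S)=\dim_{\mathrm{k}}\mathrm{k}\langle S\rangle$, $ST=\{st\mid s\in S,t\in T\}$. Hypothesis $\mathbf{H}_{\mathrm{s}}$: $\mathcal{A}$ is finite-dimensional over $\mathrm{k}$, or $\mathrm{k}\in\{\mathbb{R},\mathbb{C}\}$ and $\mathcal{A}$ is a Banach algebra over $\mathrm{k}$, or $\mathcal{A}$ is a finite product of field extensions of $\mathrm{k}$. Connectivity: for a finite-dimensional subspace $W$ set $c(W):=\dim_{\mathrm{k}}(\mathrm{k}\langle WV\rangle)-\lambda\dim_{\mathrm{k}}(W)$. Let $\kappa$ be the infimum of $c(W)$ over all finite-dimensional subspaces $W$ with $W\cap U(\mathcal{A})\neq\emptyset$. A fragment of $V$ is such a subspace $W$ (finite-dimensional, meeting $U(\mathcal{A})$) with $c(W)=\kappa$; an atom of $V$ is a fragment of minimal dimension. *)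

(* Defs.v *)
From HB Require Import structures.
From mathcomp Require Import all_boot all_order all_algebra.
From mathcomp Require Import boolp classical_sets reals.
From mathcomp Require Import complex.
Set Implicit Arguments. Unset Strict Implicit. Unset Printing Implicit Defensive.
Import Order.TTheory GRing.Theory Num.Theory.
Local Open Scope classical_set_scope.
Local Open Scope ring_scope.

Section Defs.
Variables (k : fieldType) (A : algType k).

Definition infinite_field (F : fieldType) : Prop :=
  forall s : seq F, exists x : F, x \notin s.

Definition isunit (x : A) : Prop := exists y : A, x * y = 1 /\ y * x = 1.

Definition span (S : set A) : set A :=
  [set x | exists (n : nat) (v : 'I_n -> A) (c : 'I_n -> k),
     (forall i, S (v i)) /\ x = \sum_(i < n) c i *: v i].

Definition fdsub (W : set A) : Prop :=
  exists (n : nat) (v : 'I_n -> A), W = span (range v).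

(* dim_k(S) = dim_k k<S> : the least size of a finite family spanning k<S>
   (0 by convention if k<S> is not finite-dimensional; never used then) *)
Definition spans_with (S : set A) (n : nat) : Prop :=
  exists v : 'I_n -> A, span S = span (range v).

Definition dimk (S : set A) : nat :=
  match pselect (exists n, spans_with S n) with
  | left H => ex_minn (P := fun n => `[< spans_with S n >])
                (let: ex_intro n Hn := H in ex_intro _ n (asboolT Hn))
  | right _ => 0%N
  end.

Definition setmul (S T : set A) : set A :=
  [set z | exists s t, S s /\ T t /\ z = s * t].

Definition meets_units (W : set A) : Prop := exists x, W x /\ isunit x.

Definition admissible (W : set A) : Prop := fdsub W /\ meets_units W.

Variable R : realType.

Definition conn (V : set A) (lambda : R) (W : set A) : R :=
  (dimk (setmul W V))%:R - lambda * (dimk W)%:R.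

Definition kappa (V : set A) (lambda : R) : R :=
  inf [set conn V lambda W | W in admissible].

Definition fragment (V : set A) (lambda : R) (W : set A) : Prop :=
  admissible W /\ conn V lambda W = kappa V lambda.

Definition atom (V : set A) (lambda : R) (W : set A) : Prop :=
  fragment V lambda W /\
  forall W', fragment V lambda W' -> (dimk W <= dimk W')%N.

Definition Hl (V : set A) : set A := [set h | forall v, V v -> V (h * v)].

Definition subalgebra (H : set A) : Prop :=
  [/\ H 0, H 1, (forall x y, H x -> H y -> H (x + y)),
      (forall (a : k) x, H x -> H (a *: x)) &
      (forall x y, H x -> H y -> H (x * y))].

Definition Hs_findim : Prop := exists (n : nat) (v : 'I_n -> A), span (range v) = setT.

Definition banach_norm (absk : k -> R) : Prop :=
  exists N : A -> R,
  [/\ (forall x, 0 <= N x) /\ (forall x, N x = 0 <-> x = 0),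
      (forall x y, N (x + y) <= N x + N y),
      (forall (a : k) x, N (a *: x) = absk a * N x),
      (forall x y, N (x * y) <= N x * N y) &
      (forall u : nat -> A,
         (forall e : R, 0 < e -> exists M, forall m n, (M <= m)%N -> (M <= n)%N ->
             N (u m - u n) < e) ->
         exists l : A, forall e : R, 0 < e -> exists M, forall n, (M <= n)%N ->
             N (u n - l) < e)].

Definition absC (z : R[i]) : R := Num.sqrt (complex.Re z ^+ 2 + complex.Im z ^+ 2).

Definition Hs_banach : Prop :=
  (exists f : {rmorphism k -> R}, bijective f /\ banach_norm (fun a => `|f a|))
  \/ (exists f : {rmorphism k -> R[i]}, bijective f /\ banach_norm (fun a => absC (f a))).

Definition Hs_prodfields : Prop :=
  exists (n : nat) (L : 'I_n -> fieldType)
         (iota : forall i, {rmorphism k -> L i})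
         (phi : A -> forall i, L i),
  [/\ bijective phi,
      phi 1 = (fun i => 1),
      (forall x y, phi (x + y) = (fun i => phi x i + phi y i)),
      (forall x y, phi (x * y) = (fun i => phi x i * phi y i)) &
      (forall (a : k) x, phi (a *: x) = (fun i => iota i a * phi x i))].

Definition Hs : Prop := [\/ Hs_findim, Hs_banach | Hs_prodfields].

End Defs.

(* Main.v *)
Require Import Defs.
From HB Require Import structures.
From mathcomp Require Import all_boot all_order all_algebra.
From mathcomp Require Import boolp classical_sets reals.
From mathcomp Require Import zify lra ring.
Import Order.TTheory GRing.Theory Num.Theory.
Local Open Scope classical_set_scope.
Local Open Scope ring_scope.
Set Implicit Arguments. Unset Strict Implicit. Unset Printing Implicit Defensive.

Section Spans.
Variables (k : fieldType) (A : algType k).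
Implicit Types (S T X Y W : set A).
Local Notation span := (@Defs.span k A).

Definition subsp X := [/\ X 0, (forall x y, X x -> X y -> X (x + y)) &
   (forall (a : k) x, X x -> X (a *: x))].

Lemma subsp_sum X (I : Type) (r : seq I) (P : pred I) (F : I -> A) :
  subsp X -> (forall i, P i -> X (F i)) -> X (\sum_(i <- r | P i) F i).
Proof. by case=> X0 XD _ HF; apply: big_ind. Qed.

Lemma subsp_lin X (n : nat) (c : 'I_n -> k) (v : 'I_n -> A) :
  subsp X -> (forall i, X (v i)) -> X (\sum_(i < n) c i *: v i).
Proof. by move=> sX Hv; apply: subsp_sum => // i _; case: sX => _ _; apply. Qed.

Lemma subsp_opp X x : subsp X -> X x -> X (- x).
Proof. by case=> _ _ XZ /(XZ (-1)); rewrite scaleN1r. Qed.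

Lemma subsp_sub X x y : subsp X -> X x -> X y -> X (x - y).
Proof. by move=> sX Xx Xy; case: (sX) => _ XD _; apply: XD => //; apply: subsp_opp. Qed.

Lemma span_sub S : S `<=` span S.
Proof.
move=> x Sx; exists 1%N, (fun _ => x), (fun _ => 1); split => //.
by rewrite big_ord1 scale1r.
Qed.

Lemma subsp_span S : subsp (span S).
Proof.
split.
- by exists 0%N, (fun _ => 0), (fun _ => 0); split; [case | rewrite big_ord0].
- move=> x y [n1 [v1 [c1 [H1 ->]]]] [n2 [v2 [c2 [H2 ->]]]].
  exists (n1 + n2)%N, (fun i => match split i with inl a => v1 a | inr b => v2 b end),
    (fun i => match split i with inl a => c1 a | inr b => c2 b end); split.
    by move=> i; case: (split i).
  by rewrite big_split_ord /=; congr (_ + _); apply: eq_bigr => i _;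
    rewrite ?split_lshift ?split_rshift //;
    [rewrite (unsplitK (inl _ i)) | rewrite (unsplitK (inr _ i))].
- move=> a x [n [v [c [H ->]]]]; exists n, v, (fun i => a * c i); split => //.
  by rewrite scaler_sumr; apply: eq_bigr => i _; rewrite scalerA.
Qed.

Lemma span_min S X : subsp X -> S `<=` X -> span S `<=` X.
Proof. by move=> sX SX x [n [v [c [H ->]]]]; apply: subsp_lin => // i; apply: SX. Qed.

Lemma span_mono S T : S `<=` T -> span S `<=` span T.
Proof. by move=> ST; apply: span_min; [apply: subsp_span| move=> x /ST /span_sub]. Qed.

Lemma span_id X : subsp X -> span X = X.
Proof. by move=> sX; apply/seteqP; split; [apply: span_min | apply: span_sub]. Qed.

Lemma span_span S : span (span S) = span S.
Proof. exact: span_id (subsp_span S). Qed.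

Lemma span_range (n : nat) (w : 'I_n -> A) x :
  span (range w) x <-> exists c : 'I_n -> k, x = \sum_(i < n) c i *: w i.
Proof.
split; last by move=> [c ->]; exists n, w, c; split => // i; exists i.
move: x; apply: span_min; last first.
  move=> _ [j _ <-]; exists (fun i => (i == j)%:R).
  rewrite (bigD1 j) //= eqxx scale1r big1 ?addr0 // => i /negbTE ->; by rewrite scale0r.
split.
- by exists (fun _ => 0); rewrite big1 // => i _; rewrite scale0r.
- move=> x y [c1 ->] [c2 ->]; exists (fun i => c1 i + c2 i).
  by rewrite -big_split; apply: eq_bigr => i _; rewrite scalerDl.
- move=> a x [c ->]; exists (fun i => a * c i).
  by rewrite scaler_sumr; apply: eq_bigr => i _; rewrite scalerA.
Qed.

Lemma dimk_le S n : spans_with S n -> (dimk S <= n)%N.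
Proof.
move=> Hn; rewrite /dimk; case: pselect => [H|[]]; last by exists n.
case: ex_minnP => m _; apply; exact: asboolT.
Qed.

Lemma dimk_spec S : (exists n, spans_with S n) -> spans_with S (dimk S).
Proof.
move=> Hex; rewrite /dimk; case: pselect => [H|//].
by case: ex_minnP => m /asboolP.
Qed.

Lemma dimk_span S : dimk (span S) = dimk S.
Proof.
have E : spans_with (span S) = spans_with S.
  apply: funext => n; apply: propext; split => -[v Hv]; exists v;
  by rewrite -Hv ?span_span.
by rewrite /dimk E.
Qed.

Lemma fdsub_spans S : fdsub (span S) -> exists n, spans_with S n.
Proof. by case=> n [v Hv]; exists n, v. Qed.

End Spans.

Section Transfer.
Variables (k : fieldType) (A : algType k).
Local Notation span := (@Defs.span k A).
Implicit Types (S T X Y W : set A).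

Definition phi (m : nat) (u : 'I_m -> A) (c : 'rV[k]_m) : A := \sum_i c 0 i *: u i.

Lemma phiD m (u : 'I_m -> A) c d : phi u (c + d) = phi u c + phi u d.
Proof. by rewrite /phi -big_split; apply: eq_bigr => i _; rewrite mxE scalerDl. Qed.

Lemma phiZ m (u : 'I_m -> A) a c : phi u (a *: c) = a *: phi u c.
Proof. by rewrite /phi scaler_sumr; apply: eq_bigr => i _; rewrite mxE scalerA. Qed.

Lemma phi0 m (u : 'I_m -> A) : phi u 0 = 0.
Proof. by rewrite /phi big1 // => i _; rewrite mxE scale0r. Qed.

Lemma phiN m (u : 'I_m -> A) c : phi u (- c) = - phi u c.
Proof. by rewrite -scaleN1r phiZ scaleN1r. Qed.

Lemma phiB m (u : 'I_m -> A) c d : phi u (c - d) = phi u c - phi u d.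
Proof. by rewrite phiD phiN. Qed.

Lemma phi_sum m (u : 'I_m -> A) (I : Type) (r : seq I) (F : I -> 'rV_m) :
  phi u (\sum_(i <- r) F i) = \sum_(i <- r) phi u (F i).
Proof.
elim: r => [|x r IH]; first by rewrite !big_nil phi0.
by rewrite !big_cons phiD IH.
Qed.

Lemma phi_mul m p (u : 'I_m -> A) (y : 'rV_p) (M : 'M_(p, m)) :
  phi u (y *m M) = \sum_j y 0 j *: phi u (row j M).
Proof.
rewrite mulmx_sum_row phi_sum; apply: eq_bigr => j _; by rewrite phiZ.
Qed.

Lemma phi_submx m p (u : 'I_m -> A) (M : 'M_(p, m)) (X : set A) c :
  subsp X -> (forall j, X (phi u (row j M))) -> (c <= M)%MS -> X (phi u c).
Proof.
move=> sX HM /submxP [y ->]; rewrite phi_mul.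
by apply: subsp_sum => // j _; case: sX => _ _; apply.
Qed.

Lemma span_phi m (u : 'I_m -> A) x :
  span (range u) x <-> exists c, x = phi u c.
Proof.
rewrite span_range; split => -[c ->].
  by exists (\row_i c i); rewrite /phi; apply: eq_bigr => i _; rewrite mxE.
by exists (fun i => c 0 i).
Qed.

Lemma rep_exists m (Q : 'rV[k]_m -> Prop) :
  Q 0 -> (forall c d, Q c -> Q d -> Q (c + d)) -> (forall a c, Q c -> Q (a *: c)) ->
  exists P : 'M[k]_m, forall c, (c <= P)%MS <-> Q c.
Proof.
move=> Q0 QD QZ.
have Qsum (p : nat) (M : 'M_(p, m)) c : (forall j, Q (row j M)) -> (c <= M)%MS -> Q c.
  move=> HM /submxP [y ->]; rewrite mulmx_sum_row.
  by apply: big_ind => // j _; apply: QZ.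
pose good n := `[< exists P : 'M[k]_m, (forall i, Q (row i P)) /\ \rank P = n >].
have ex0 : exists n, good n.
  by exists 0%N; apply/asboolP; exists 0; split; [move=> i; rewrite row0 | rewrite mxrank0].
have bnd : forall n, good n -> (n <= m)%N.
  by move=> n /asboolP [P [_ <-]]; apply: rank_leq_col.
case: (ex_maxnP ex0 bnd) => n /asboolP [P [HP rP]] maxn.
exists P => c; split; first by apply: Qsum.
move=> Qc; apply/negPn/negP => ncP.
have HP' : forall i, Q (row i (P + c)%MS).
  move=> i; have /sub_addsmxP [[a b] /= ->] := row_sub i (P + c)%MS.
  apply: QD; first by apply: (Qsum _ P) => //; apply: submxMl.
  by apply: (Qsum _ c); [move=> j; rewrite row_id | apply: submxMl].
have := maxn (\rank (P + c)%MS) (asboolT (ex_intro _ (P + c)%MS (conj HP' erefl))).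
rewrite -rP; have := mxrank_leqif_sup (addsmxSl P c).
rewrite addsmx_sub submx_refl (negbTE ncP) => -[le eqF] h.
by move: eqF; rewrite eqn_leq le h.
Qed.


Lemma dim_rep m (u : 'I_m -> A) (X : set A) (P K : 'M[k]_m) :
  subsp X -> X `<=` span (range u) ->
  (forall c, (c <= P)%MS <-> X (phi u c)) ->
  (forall c, (c <= K)%MS <-> phi u c = 0) ->
  dimk X = (\rank P - \rank K)%N /\ fdsub X.
Proof.
move=> sX Xu HP HK.
have KP : (K <= P)%MS.
  apply/row_subP => i; apply/HP; rewrite (proj1 (HK _) (row_sub i K)).
  by case: sX.
pose D := (P :\: K)%MS; pose B := row_base D.
pose w i := phi u (row i B).
have rD : \rank D = (\rank P - \rank K)%N.
  rewrite -(mxrank_cap_compl P K) (capmx_idPr KP).1.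
  by rewrite addKn.
have EX : X = span (range w).
  apply/seteqP; split; last first.
    apply: span_min => // _ [i _ <-]; apply/HP.
    by rewrite (submx_trans (row_sub i B)) // eq_row_base diffmxSl.
  move=> x Xx; have [c Ec] := proj1 (span_phi u x) (Xu x Xx).
  have : (c <= D + K)%MS.
    have cP : (c <= P)%MS by apply/HP; rewrite -Ec.
    rewrite (submx_trans cP) //.
    rewrite -{1}(addsmx_diff_cap_eq P K) addsmxS ?capmxSr //.
  case/sub_addsmxP => -[a b] /= Ec2.
  have : (a *m D <= B)%MS by rewrite eq_row_base submxMl.
  case/submxP => z Ez.
  apply/span_range; exists (fun j => z 0 j).
  rewrite Ec Ec2 phiD (proj1 (HK _) (submxMl _ _)) addr0 Ez phi_mul.
  by [].
split; last by exists (\rank D), w.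
apply/eqP; rewrite eqn_leq; apply/andP; split.
  by rewrite -rD; apply: dimk_le; exists w; rewrite span_id.
have [v Hv] : spans_with X (dimk X) by apply: dimk_spec; exists (\rank D), w; rewrite span_id.
rewrite span_id // in Hv.
have [s Hs] : exists s : 'I_(dimk X) -> 'rV[k]_m, forall j, v j = phi u (s j).
  have H j : exists s, v j = phi u s.
    by apply/span_phi; apply: Xu; rewrite Hv; apply: span_sub; exists j.
  exact: (fin_all_exists H).
pose S := \matrix_j s j.
have PSK : (P <= S + K)%MS.
  apply/row_subP => i; set c := row i P.
  have : span (range v) (phi u c) by rewrite -Hv; apply/HP; apply: row_sub.
  move=> /span_range [a Ea].
  pose ra := \row_j a j.
  have E1 : phi u c = phi u (ra *m S).
    by rewrite Ea phi_mul; apply: eq_bigr => j _; rewrite rowK mxE Hs.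
  have : (c - ra *m S <= K)%MS by apply/HK; rewrite phiB E1 subrr.
  move=> H; have -> : c = ra *m S + (c - ra *m S) by rewrite addrC subrK.
  apply: addmx_sub_adds => //; exact: submxMl.
rewrite leq_subLR; apply: leq_trans (mxrankS PSK) _.
apply: leq_trans (mxrank_adds_leqif S K).1 _.
by rewrite addnC leq_add2l rank_leq_row.
Qed.

End Transfer.

Section Dim.
Variables (k : fieldType) (A : algType k).
Local Notation span := (@Defs.span k A).
Implicit Types (S T X Y W : set A).

Lemma rep_of m (u : 'I_m -> A) X : subsp X ->
  exists P : 'M[k]_m, forall c, (c <= P)%MS <-> X (phi u c).
Proof.
case=> X0 XD XZ; apply: rep_exists.
- by rewrite phi0.
- by move=> c d Hc Hd; rewrite phiD; apply: XD.
- by move=> a c Hc; rewrite phiZ; apply: XZ.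
Qed.

Lemma subsp0 : subsp [set (0 : A)].
Proof. rewrite /subsp /set1 /=; split => [//|x y -> ->|a x ->]; by rewrite ?addr0 ?scaler0. Qed.

Lemma subsp_fd X : fdsub X -> subsp X.
Proof. by case=> n [v ->]; apply: subsp_span. Qed.

Lemma subsp_I X Y : subsp X -> subsp Y -> subsp (X `&` Y).
Proof.
case=> X0 XD XZ [Y0 YD YZ]; split => //.
- by move=> x y [? ?] [? ?]; split; [apply: XD | apply: YD].
- by move=> a x [? ?]; split; [apply: XZ | apply: YZ].
Qed.

Definition catf m n (v1 : 'I_m -> A) (v2 : 'I_n -> A) (i : 'I_(m + n)) :=
  match split i with inl a => v1 a | inr b => v2 b end.

Lemma catf_l m n (v1 : 'I_m -> A) (v2 : 'I_n -> A) :
  span (range v1) `<=` span (range (catf v1 v2)).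
Proof.
apply: span_mono => _ [a _ <-]; exists (lshift n a) => //.
by rewrite /catf (unsplitK (inl _ a)).
Qed.

Lemma catf_r m n (v1 : 'I_m -> A) (v2 : 'I_n -> A) :
  span (range v2) `<=` span (range (catf v1 v2)).
Proof.
apply: span_mono => _ [a _ <-]; exists (rshift m a) => //.
by rewrite /catf (unsplitK (inr _ a)).
Qed.

Lemma rep_K m (u : 'I_m -> A) X (P K : 'M[k]_m) : subsp X ->
  (forall c, (c <= P)%MS <-> X (phi u c)) ->
  (forall c, (c <= K)%MS <-> [set 0] (phi u c)) -> (K <= P)%MS.
Proof.
case=> X0 _ _ HP HK; apply/row_subP => i; apply/HP.
by rewrite (proj1 (HK _) (row_sub i K)).
Qed.

Lemma dimP m (u : 'I_m -> A) X (P K : 'M[k]_m) : subsp X -> X `<=` span (range u) ->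
  (forall c, (c <= P)%MS <-> X (phi u c)) ->
  (forall c, (c <= K)%MS <-> [set 0] (phi u c)) ->
  dimk X = (\rank P - \rank K)%N /\ fdsub X.
Proof. move=> sX Xu HP HK; exact: (dim_rep sX Xu HP HK). Qed.

Lemma subsp_sub_fd X Y : subsp X -> fdsub Y -> X `<=` Y ->
  fdsub X /\ (dimk X <= dimk Y)%N.
Proof.
move=> sX fY XY; have sY := subsp_fd fY.
case: fY => m [u Yu].
have [PX HX] := rep_of u sX; have [PY HY] := rep_of u sY.
have [K HK] := rep_of u subsp0.
have Yu' : Y `<=` span (range u) by rewrite Yu.
have [dX fX] := dimP sX (subset_trans XY Yu') HX HK.
have [dY _] := dimP sY Yu' HY HK.
split => //; rewrite dX dY leq_sub2r // mxrankS //.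
by apply/row_subP => i; apply/HY; apply: XY; apply/HX; apply: row_sub.
Qed.

Lemma dim_eq_sub X Y : subsp X -> fdsub Y -> X `<=` Y -> (dimk Y <= dimk X)%N -> X = Y.
Proof.
move=> sX fY XY le; have sY := subsp_fd fY.
case: fY => m [u Yu].
have [PX HX] := rep_of u sX; have [PY HY] := rep_of u sY.
have [K HK] := rep_of u subsp0.
have Yu' : Y `<=` span (range u) by rewrite Yu.
have [dX fX] := dimP sX (subset_trans XY Yu') HX HK.
have [dY _] := dimP sY Yu' HY HK.
have KX := rep_K sX HX HK.
have sXY : (PX <= PY)%MS.
  by apply/row_subP => i; apply/HY; apply: XY; apply/HX; apply: row_sub.
have : (\rank PY <= \rank PX)%N.
  move: le; rewrite dX dY; have := mxrankS KX; lia.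
move=> H; have sYX : (PY <= PX)%MS by rewrite -(mxrank_leqif_sup sXY).2 eqn_leq mxrankS.
apply/seteqP; split => // y Yy.
have [c Ec] := proj1 (span_phi u y) (Yu' y Yy).
rewrite Ec; apply/HX; rewrite (submx_trans _ sYX) //; apply/HY; by rewrite -Ec.
Qed.


Lemma span_U_dec X Y z : subsp X -> subsp Y -> span (X `|` Y) z ->
  exists x y, [/\ X x, Y y & z = x + y].
Proof.
move=> [X0 XD XZ] [Y0 YD YZ]; move: z.
apply: (@span_min _ _ _ [set z | exists x y, [/\ X x, Y y & z = x + y]]).
- split.
  + by exists 0, 0; rewrite addr0.
  + move=> _ _ [x1 [y1 [? ? ->]]] [x2 [y2 [? ? ->]]]; exists (x1 + x2), (y1 + y2).
    by split; [apply: XD | apply: YD | rewrite addrACA].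
  + move=> a _ [x [y [? ? ->]]]; exists (a *: x), (a *: y).
    by split; [apply: XZ | apply: YZ | rewrite scalerDr].
- move=> z [Xz|Yz]; first by exists z, 0; rewrite addr0.
  by exists 0, z; rewrite add0r.
Qed.

Lemma dim_modular X Y : fdsub X -> fdsub Y ->
  [/\ fdsub (X `&` Y), fdsub (span (X `|` Y)) &
      (dimk (X `&` Y) + dimk (span (X `|` Y)) = dimk X + dimk Y)%N].
Proof.
move=> fX fY; have sX := subsp_fd fX; have sY := subsp_fd fY.
case: fX => m1 [v1 EX]; case: fY => m2 [v2 EY].
pose u := catf v1 v2.
have Xu : X `<=` span (range u) by rewrite EX; apply: catf_l.
have Yu : Y `<=` span (range u) by rewrite EY; apply: catf_r.
have [PX HX] := rep_of u sX; have [PY HY] := rep_of u sY.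
have [K HK] := rep_of u subsp0.
have sI := subsp_I sX sY.
have sZ := @subsp_span _ _ (X `|` Y).
have Zu : span (X `|` Y) `<=` span (range u).
  by apply: span_min; [apply: subsp_span | move=> x [/Xu|/Yu]].
have HI : forall c, (c <= PX :&: PY)%MS <-> (X `&` Y) (phi u c).
  by move=> c; rewrite sub_capmx; split => [/andP [/HX ? /HY ?]|[/HX -> /HY ->]].
have HZ : forall c, (c <= PX + PY)%MS <-> span (X `|` Y) (phi u c).
  move=> c; split.
    case/sub_addsmxP => -[a b] /= ->; rewrite phiD.
    case: sZ => _ ZD _; apply: ZD; apply: span_sub.
      by left; apply/HX; apply: submxMl.
    by right; apply/HY; apply: submxMl.
  case/(span_U_dec sX sY) => x [y [Xx Yy Ec]].
  have [a Ea] := proj1 (span_phi u x) (Xu x Xx).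
  have [b Eb] := proj1 (span_phi u y) (Yu y Yy).
  have aP : (a <= PX)%MS by apply/HX; rewrite -Ea.
  have bP : (b <= PY)%MS by apply/HY; rewrite -Eb.
  have cK : (c - b - a <= K)%MS by apply/HK; rewrite /set1 /= !phiB Ec -Ea -Eb addrK subrr.
  have -> : c = (c - b - a + a) + b by rewrite subrK subrK.
  apply: addmx_sub_adds => //; apply: addmx_sub => //.
  exact: submx_trans cK (rep_K sX HX HK).
have [dI fI] := dimP sI (subset_trans (@subIsetl _ X Y) Xu) HI HK.
have [dZ fZ] := dimP sZ Zu HZ HK.
have [dX _] := dimP sX Xu HX HK.
have [dY _] := dimP sY Yu HY HK.
split => //; rewrite dI dZ dX dY.
have := mxrank_sum_cap PX PY; have := mxrankS (rep_K sI HI HK).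
have := mxrankS (capmxSl PX PY); have := mxrankS (capmxSr PX PY).
have := mxrankS (addsmxSl PX PY).
lia.
Qed.

Lemma dim_mono S T : fdsub (span T) -> S `<=` span T -> (dimk S <= dimk T)%N.
Proof.
move=> fT ST; rewrite -(dimk_span S) -(dimk_span T).
apply: (subsp_sub_fd (subsp_span S) fT _).2.
by rewrite -(span_span T); apply: span_mono.
Qed.

Lemma dim_mono_fd S T : fdsub (span T) -> S `<=` span T -> fdsub (span S).
Proof.
move=> fT ST; apply: (subsp_sub_fd (subsp_span S) fT _).1.
by rewrite -(span_span T); apply: span_mono.
Qed.

End Dim.

Section Lin.
Variables (k : fieldType) (A : algType k).
Local Notation span := (@Defs.span k A).
Implicit Types (S T X Y W : set A).

Definition lin (g : A -> A) :=
  (forall x y, g (x + y) = g x + g y) /\ (forall (a : k) x, g (a *: x) = a *: g x).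

Lemma lin0 g : lin g -> g 0 = 0.
Proof. by case=> gD _; apply: (addrI (g 0)); rewrite -gD !addr0. Qed.

Lemma lin_sum g (n : nat) (c : 'I_n -> k) (v : 'I_n -> A) : lin g ->
  g (\sum_(i < n) c i *: v i) = \sum_(i < n) c i *: g (v i).
Proof.
move=> lg; have [gD gZ] := lg.
rewrite (big_morph g gD (lin0 lg)); apply: eq_bigr => i _; exact: gZ.
Qed.

Lemma lin_span g S : lin g -> span (g @` S) = g @` span S.
Proof.
move=> lg; have [gD gZ] := lg; apply/seteqP; split.
  apply: span_min.
    split.
    - by exists 0; [case: (subsp_span S) | apply: lin0].
    - move=> _ _ [x Hx <-] [y Hy <-]; exists (x + y) => //.
      by case: (subsp_span S) => _ D _; apply: D.
    - move=> a _ [x Hx <-]; exists (a *: x) => //.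
      by case: (subsp_span S) => _ _ Z; apply: Z.
  by move=> _ [x Sx <-]; exists x => //; apply: span_sub.
move=> _ [x [n [v [c [Hv ->]]]] <-]; rewrite lin_sum //.
apply: subsp_lin; first exact: subsp_span.
by move=> i; apply: span_sub; exists (v i).
Qed.

Lemma lin_dim g S : lin g -> fdsub (span S) ->
  (dimk (g @` S) <= dimk S)%N /\ fdsub (span (g @` S)).
Proof.
move=> lg fS; have [v Hv] := dimk_spec (fdsub_spans fS).
have E : span (g @` S) = span (range (g \o v)).
  by rewrite lin_span // Hv -lin_span // image_comp.
split; first by apply: dimk_le; exists (g \o v).
by exists (dimk S), (g \o v).
Qed.

Lemma lin_dim_eq g g' S : lin g -> lin g' -> (forall x, g' (g x) = x) ->
  fdsub (span S) -> dimk (g @` S) = dimk S /\ fdsub (span (g @` S)).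
Proof.
move=> lg lg' gK fS; have [le1 f1] := lin_dim lg fS.
have [le2 _] := lin_dim lg' f1.
have E : g' @` (g @` S) = S.
  rewrite image_comp; apply/seteqP; split => [_ [x Sx <-]|x Sx]; first by rewrite /= gK.
  by exists x => //=; rewrite gK.
rewrite E in le2; split; [by apply/eqP; rewrite eqn_leq le1 le2 | exact: f1].
Qed.

Lemma lin_left (x : A) : lin (fun h => x * h).
Proof. by split => [a b|a b]; rewrite ?mulrDr ?scalerAr. Qed.

Lemma lin_right (x : A) : lin (fun h => h * x).
Proof. by split => [a b|a b]; rewrite ?mulrDl ?scalerAl. Qed.

Lemma range_fin (T : finType) (f : T -> A) :
  exists n (F : 'I_n -> A), range F = range f.
Proof.
exists #|T|, (fun i => f (enum_val i)); apply/seteqP; split => _ [i _ <-].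
  by exists (enum_val i).
by exists (enum_rank i) => //; rewrite enum_rankK.
Qed.

Lemma setmul_fd W V : fdsub W -> fdsub V -> fdsub (span (setmul W V)).
Proof.
case=> n1 [w ->] [n2 [v ->]].
have [n [F EF]] := range_fin (fun p : 'I_n1 * 'I_n2 => w p.1 * v p.2).
apply: (@dim_mono_fd _ _ _ (range F)); first by exists n, F.
move=> _ [s [t [/span_range [a ->] [/span_range [b ->] ->]]]].
rewrite mulr_suml; apply: subsp_sum; first exact: subsp_span.
move=> i _; rewrite mulr_sumr; apply: subsp_sum; first exact: subsp_span.
move=> j _; rewrite -scalerAl -scalerAr scalerA.
case: (subsp_span (range F)) => _ _ Z; apply: Z; apply: span_sub.
by rewrite EF; exists (i, j).
Qed.

End Lin.

Section Conn.
Variables (k : fieldType) (A : algType k) (R : realType) (V : set A) (lambda : R).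
Hypotheses (fV : fdsub V) (uV : meets_units V) (l0 : 0 < lambda) (l1 : lambda <= 1).
Local Notation span := (@Defs.span k A).
Local Notation conn := (@conn k A R V lambda).
Implicit Types (S T X Y W : set A).

Lemma unit_mul (x y : A) : isunit x -> isunit y -> isunit (x * y).
Proof.
move=> [x' [h1 h2]] [y' [h3 h4]]; exists (y' * x'); split.
  by rewrite mulrA -(mulrA x) h3 mulr1 h1.
by rewrite mulrA -(mulrA y') h2 mulr1 h4.
Qed.

Lemma isunit1 : @isunit k A 1.
Proof. by exists 1; rewrite mulr1. Qed.

Lemma adm_V : admissible V.
Proof. by split. Qed.

Lemma fd_span W : fdsub W -> fdsub (span W).
Proof. by move=> fW; rewrite span_id //; apply: subsp_fd. Qed.

Lemma tr_props (x : A) W : isunit x -> admissible W ->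
  [/\ admissible [set x * h | h in W], dimk [set x * h | h in W] = dimk W &
      conn [set x * h | h in W] = conn W].
Proof.
move=> [y [xy yx]] [fW [u [Wu uu]]].
have gK : forall h, y * (x * h) = h by move=> h; rewrite mulrA yx mul1r.
have sW := subsp_fd fW.
have [dE fE] := lin_dim_eq (lin_left x) (lin_left y) gK (fd_span fW).
have fE' : fdsub [set x * h | h in W].
  by move: fE; rewrite (lin_span _ (lin_left x)) span_id.
have ES : setmul [set x * h | h in W] V = [set x * h | h in setmul W V].
  apply/seteqP; split.
    by move=> _ [_ [t [[h Wh <-] [Vt ->]]]]; exists (h * t); [exists h, t | rewrite mulrA].
  by move=> _ [_ [h [t [Wh [Vt ->]]]] <-]; exists (x * h), t; split => //; [exists h | rewrite mulrA].
have [dE2 _] := lin_dim_eq (lin_left x) (lin_left y) gK (setmul_fd fW fV).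
split => //.
- split => //; exists (x * u); split; first by exists u.
  by apply: unit_mul => //; exists y.
- by rewrite /Defs.conn dE ES dE2.
Qed.

Lemma dim_WV W : admissible W -> (dimk W <= dimk (setmul W V))%N.
Proof.
move=> [fW _]; case: uV => v [Vv [v' [h1 h2]]].
have gK : forall h, h * v * v' = h by move=> h; rewrite -mulrA h1 mulr1.
have [dE _] := lin_dim_eq (lin_right v) (lin_right v') gK (fd_span fW).
rewrite -dE; apply: dim_mono; first exact: setmul_fd.
by move=> _ [h Wh <-]; apply: span_sub; exists h, v.
Qed.

Lemma conn_ge0 W : admissible W -> 0 <= conn W.
Proof.
move=> aW; have := dim_WV aW; rewrite -(ler_nat R) /Defs.conn.
set a := (dimk (setmul W V))%:R; set b := (dimk W)%:R => hab.
have b0 : 0 <= b by rewrite /b ler0n.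
have := @mulr_ge0 _ (1 - lambda) b; rewrite subr_ge0 => /(_ l1 b0).
rewrite mulrBl mul1r; lra.
Qed.

Lemma list_min (s : seq R) a : exists m, m \in a :: s /\ forall y, y \in a :: s -> m <= y.
Proof.
elim: s a => [|b s IH] a.
  by exists a; split; [rewrite mem_seq1 | move=> y; rewrite mem_seq1 => /eqP ->].
have [m' [m's m'min]] := IH b.
have [am|ma] := leP a m'.
  exists a; split; first by rewrite in_cons eqxx.
  move=> y; rewrite in_cons => /orP [/eqP ->//|ys].
  exact: le_trans am (m'min _ ys).
exists m'; split; first by rewrite in_cons m's orbT.
move=> y; rewrite in_cons => /orP [/eqP ->|ys]; last exact: m'min.
exact: ltW.
Qed.

Lemma min_conn : exists W0, admissible W0 /\ forall W, admissible W -> conn W0 <= conn W.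
Proof.
pose P := [set conn W | W in @admissible k A].
pose x0 := conn V.
have x0ge : 0 <= x0 := conn_ge0 adm_V.
have [L HL] : exists L : seq R, forall W, admissible W -> conn W <= x0 -> conn W \in L.
  have [l_eq|l_lt] : lambda = 1 \/ lambda < 1 by move: l1; rewrite le_eqVlt => /orP [/eqP|]; auto.
    exists [seq (i%:R : R) | i <- iota 0 (Num.bound x0)] => W aW cW.
    have hab := dim_WV aW.
    have E : conn W = (dimk (setmul W V) - dimk W)%:R.
      by rewrite /Defs.conn l_eq mul1r natrB.
    rewrite E; apply: map_f; rewrite mem_iota /= -(ltr_nat R) -E.
    exact: le_lt_trans cW (archi_boundP x0ge).
  have l1' : 0 < 1 - lambda by rewrite subr_gt0.
  pose y := x0 / (1 - lambda) + x0.
  have y0 : 0 <= y by rewrite addr_ge0 // divr_ge0 // ltW.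
  pose N := Num.bound y.
  exists [seq (a%:R : R) - lambda * b%:R | a <- iota 0 N, b <- iota 0 N] => W aW cW.
  have := dim_WV aW; rewrite -(ler_nat R) => hab.
  move: cW; rewrite /Defs.conn.
  set a := dimk (setmul W V); set b := dimk W => cW.
  have hb : (b%:R : R) <= x0 / (1 - lambda).
    rewrite ler_pdivlMr // mulrBr mulr1 mulrC; lra.
  have b0 : (0 : R) <= b%:R by rewrite ler0n.
  have hN := archi_boundP y0.
  apply: (allpairs_f (fun a b : nat => (a%:R : R) - lambda * b%:R)); rewrite mem_iota /= -(ltr_nat R).
    apply: le_lt_trans hN; rewrite /y; nra.
  apply: le_lt_trans hN; rewrite /y; lra.
pose L' := [seq x <- L | `[< P x >] && (x <= x0)].
have x0L : x0 \in L'.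
  rewrite mem_filter lexx andbT; apply/andP; split.
    by apply/asboolP; exists V => //; apply: adm_V.
  by apply: HL => //; apply: adm_V.
have [z [s Es]] : exists z s, L' = z :: s.
  by move: x0L; case: (L') => [//|z s _]; exists z, s.
have [m [mL mmin]] := list_min s z.
rewrite -Es mem_filter in mL; case/andP: mL => /andP [/asboolP [W0 aW0 EW0] mx0] _.
exists W0; split => // W aW; rewrite EW0.
have [le|lt] := leP (conn W) x0.
  apply: mmin; rewrite -Es mem_filter le andbT; apply/andP; split.
    by apply/asboolP; exists W.
  exact: HL.
exact: le_trans mx0 (ltW lt).
Qed.

End Conn.

Section Atoms.
Variables (k : fieldType) (A : algType k) (R : realType) (V : set A) (lambda : R).
Hypotheses (fV : fdsub V) (uV : meets_units V) (l0 : 0 < lambda) (l1 : lambda <= 1).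
Local Notation span := (@Defs.span k A).
Local Notation conn := (@conn k A R V lambda).
Local Notation kappa := (@kappa k A R V lambda).
Local Notation fragment := (@fragment k A R V lambda).
Local Notation atom := (@atom k A R V lambda).
Implicit Types (S T X Y W : set A).

Lemma kappa_spec : (exists W0, fragment W0) /\ forall W, admissible W -> kappa <= conn W.
Proof.
have [W0 [aW0 W0min]] := min_conn fV uV l1.
have E : kappa = conn W0.
  have lb : lbound [set conn W | W in @admissible k A] (conn W0).
    by move=> _ [W aW <-]; apply: W0min.
  apply/eqP; rewrite eq_le; apply/andP; split.
    by apply: ge_inf; [exists (conn W0) | exists W0].
  by apply: lb_le_inf => //; exists (conn W0), W0.
split; first by exists W0; split.
by move=> W aW; rewrite E; apply: W0min.
Qed.

Lemma frag_I X Y u : fragment X -> fragment Y -> X u -> Y u -> isunit u ->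
  fragment (X `&` Y).
Proof.
move=> [[fX _] cX] [[fY _] cY] Xu Yu uu.
have sX := subsp_fd fX; have sY := subsp_fd fY.
have [fI fZ dXY] := dim_modular fX fY.
set SX := span (setmul X V); set SY := span (setmul Y V).
have fSX : fdsub SX by apply: setmul_fd.
have fSY : fdsub SY by apply: setmul_fd.
have [fSI fSZ dS] := dim_modular fSX fSY.
have sSI := subsp_I (subsp_fd fSX) (subsp_fd fSY).
have d1 : (dimk (setmul (X `&` Y) V) <= dimk (SX `&` SY))%N.
  apply: dim_mono; first by rewrite span_id.
  rewrite span_id // => _ [s [t [[Xs Ys] [Vt ->]]]].
  by split; apply: span_sub; exists s, t.
have d2 : (dimk (setmul (span (X `|` Y)) V) <= dimk (span (SX `|` SY)))%N.
  apply: dim_mono; first by rewrite span_span.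
  rewrite span_span => _ [s [t [Zs [Vt ->]]]].
  have [x [y [Xx Yy ->]]] := span_U_dec sX sY Zs.
  rewrite mulrDl; case: (subsp_span (SX `|` SY)) => _ D _; apply: D; apply: span_sub.
    by left; apply: span_sub; exists x, t.
  by right; apply: span_sub; exists y, t.
have aI : admissible (X `&` Y) by split => //; exists u.
have aZ : admissible (span (X `|` Y)).
  by split => //; exists u; split => //; apply: span_sub; left.
have [_ kmin] := kappa_spec.
have k1 := kmin _ aI; have k2 := kmin _ aZ.
split => //; apply/eqP; rewrite eq_le k1 andbT.
have Hn : (dimk (setmul (X `&` Y) V) + dimk (setmul (span (X `|` Y)) V) <=
           dimk (setmul X V) + dimk (setmul Y V))%N.
  by rewrite -(dimk_span (setmul X V)) -(dimk_span (setmul Y V)) -/SX -/SY -dS; apply: leq_add.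
move: Hn; rewrite -(ler_nat R) !natrD => Hn.
have Hd : lambda * (dimk (X `&` Y))%:R + lambda * (dimk (span (X `|` Y)))%:R =
          lambda * (dimk X)%:R + lambda * (dimk Y)%:R.
  by rewrite -!mulrDr -!natrD dXY.
move: k2 cX cY; rewrite /Defs.conn => k2 cX cY.
lra.
Qed.

Lemma atom_eq X Y u : atom X -> atom Y -> X u -> Y u -> isunit u -> X = Y.
Proof.
move=> [frX minX] [frY minY] Xu Yu uu.
have frI := frag_I frX frY Xu Yu uu.
have [[fX _] _] := frX; have [[fY _] _] := frY.
have [[fI _] _] := frI.
have EX : X `&` Y = X.
  apply: dim_eq_sub (subsp_fd fI) fX (@subIsetl _ X Y) (minX _ frI).
have EY : X `&` Y = Y.
  apply: dim_eq_sub (subsp_fd fI) fY (@subIsetr _ X Y) (minY _ frI).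
by rewrite -EX EY.
Qed.

Lemma atom_tr (x : A) X : isunit x -> atom X -> atom [set x * h | h in X].
Proof.
move=> ux [[aX cX] minX]; have [aT dT cT] := tr_props lambda fV ux aX.
by split; [split => //; rewrite cT | move=> W' fW'; rewrite dT; apply: minX].
Qed.

Lemma atom_exists : exists X, atom X.
Proof.
have [[W0 frW0] _] := kappa_spec.
pose good n := `[< exists W, fragment W /\ dimk W = n >].
have ex : exists n, good n by exists (dimk W0); apply/asboolP; exists W0.
case: (ex_minnP ex) => n /asboolP [X [frX dX]] nmin.
exists X; split => // W frW; rewrite dX; apply: nmin; apply/asboolP; by exists W.
Qed.

End Atoms.

Section Findim.
Variables (k : fieldType) (A : algType k).
Local Notation span := (@Defs.span k A).

Lemma dep_fam (n : nat) (u : 'I_n -> A) (p : 'I_n.+1 -> A) :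
  (forall j, span (range u) (p j)) ->
  exists c : 'I_n.+1 -> k, (exists j, c j != 0) /\ \sum_j c j *: p j = 0.
Proof.
move=> Hp.
have H j : exists s, p j = phi u s by apply/span_phi.
have [s Hs] := fin_all_exists H.
pose S := \matrix_j s j.
have nf : ~~ row_free S.
  rewrite /row_free; apply/negP => /eqP rS.
  by have := rank_leq_col S; rewrite rS ltnn.
rewrite -kermx_eq0 in nf.
have [i ni] : exists i, row i (kermx S) != 0.
  apply/existsP; apply: contraR nf => /existsPn Hr.
  apply/eqP/row_matrixP => i; rewrite row0; apply/eqP; move: (Hr i); by rewrite negbK.
set y := row i (kermx S).
have yS : y *m S = 0 by apply/sub_kermxP; apply: row_sub.
exists (fun j => y 0 j); split.
  apply/existsP; apply: contraR ni => /existsPn Hr.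
  apply/eqP/rowP => j; have := Hr j; rewrite negbK => /eqP ->.
  by rewrite mxE.
have : phi u (y *m S) = 0 by rewrite yS phi0.
rewrite phi_mul => E; apply: etrans E; apply: eq_bigr => j _; by rewrite rowK Hs.
Qed.

Lemma uniq_list (F : fieldType) : infinite_field F -> forall n, exists s : seq F, uniq s /\ size s = n.
Proof.
move=> inf; elim=> [|n [s [us ss]]]; first by exists [::].
have [x xs] := inf s; exists (x :: s); by rewrite /= xs us ss.
Qed.

Lemma nonroot (F : fieldType) (P : {poly F}) : infinite_field F -> P != 0 ->
  exists x, ~~ root P x.
Proof.
move=> inf nz; have [s [us ss]] := uniq_list inf (size P).
case/boolP: (all (root P) s) => [allr|/allPn [x _ nr]]; last by exists x.
by have := max_poly_roots nz allr us; rewrite ss ltnn.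
Qed.

Lemma findim_shift : infinite_field k -> Hs_findim A ->
  forall h : A, exists t : k, isunit (h + t%:A).
Proof.
move=> inf [n [u Eu]] h.
have Hsp : forall j : 'I_n.+1, span (range u) (h ^+ j) by move=> j; rewrite Eu.
have [c [[j0 nzc] Ec]] := @dep_fam n u (fun j => h ^+ j) Hsp.
pose P : {poly k} := \sum_(j < n.+1) c j *: 'X^j.
have nzP : P != 0.
  apply: contraNneq nzc => P0.
  have : P`_j0 = c j0.
    rewrite /P coef_sum (bigD1 j0) //= coefZ coefXn eqxx mulr1 big1 ?addr0 //.
    move=> j nj; rewrite coefZ coefXn.
    have -> : (nat_of_ord j0 == nat_of_ord j) = false.
      by apply/negbTE; rewrite eq_sym.
    by rewrite mulr0.
  by rewrite P0 coef0 => <-.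
have [x nr] := nonroot inf nzP.
set r := P.[x].
have rnz : r != 0 by [].
have : root (P - r%:P) x by rewrite /root hornerD hornerN hornerC subrr.
case/factor_theorem => Q EQ.
have evP : horner_alg h P = 0.
  rewrite /P rmorph_sum; apply: etrans _ Ec; apply: eq_bigr => j _.
  by rewrite -mul_polyC rmorphM /= horner_algC rmorphXn /= horner_algX mulr_algl.
have E1 : horner_alg h (P - r%:P) = - r%:A by rewrite rmorphB /= horner_algC evP sub0r.
have E2 : horner_alg h ('X - x%:P) = h + (- x)%:A.
  by rewrite rmorphB /= horner_algX horner_algC scaleNr.
exists (- x); exists (- r^-1 *: horner_alg h Q); split.
  rewrite -scalerAr -E2 -rmorphM /= mulrC -EQ E1 scalerN scaleNr opprK.
  by rewrite scalerA mulVf // scale1r.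
rewrite -scalerAl -E2 -rmorphM /= -EQ E1 scalerN scaleNr opprK.
by rewrite scalerA mulVf // scale1r.
Qed.

End Findim.

Section Prodf.
Variables (k : fieldType) (A : algType k).

Lemma prod_shift : infinite_field k -> Hs_prodfields A ->
  forall h : A, exists t : k, isunit (h + t%:A).
Proof.
move=> inf [n [L [iota [ph [bij ph1 phD phM phZ]]]]] h.
have Hb i : exists b : k, forall s, iota i s = - ph h i -> s = b.
  case: (pselect (exists s, iota i s = - ph h i)) => [[s0 Hs0]|ns].
    by exists s0 => s Hs; apply: (fmorph_inj (iota i)); rewrite Hs Hs0.
  by exists 0 => s Hs; exfalso; apply: ns; exists s.
have [b Hbb] := fin_all_exists Hb.
have [t tn] := inf [seq b i | i <- enum 'I_n].
have nz i : ph h i + iota i t != 0.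
  apply/negP => /eqP E; move: tn; rewrite (Hbb i t) ?map_f ?mem_enum //.
  by apply/eqP; rewrite -addr_eq0 addrC E.
have phw : ph (h + t%:A) = fun i => ph h i + iota i t.
  rewrite phD phZ ph1; apply: functional_extensionality_dep => i /=; by rewrite mulr1.
case: bij => g phK gK.
exists t, (g (fun i => (ph h i + iota i t)^-1)); split; apply: (can_inj phK).
  rewrite phM ph1 phw gK; apply: functional_extensionality_dep => i /=.
  by rewrite mulfV ?nz.
rewrite phM ph1 phw gK; apply: functional_extensionality_dep => i /=.
by rewrite mulVf ?nz.
Qed.

End Prodf.

Section RealAux.
Variable R : realType.

Lemma geo_tail (n m : nat) : (n <= m)%N ->
  \sum_(n <= j < m) (2^-1 : R) ^+ j <= 2 * 2^-1 ^+ n - 2 * 2^-1 ^+ m.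
Proof.
move=> /subnKC <-; elim: (m - n)%N => [|d IH].
  by rewrite addn0 big_geq // subrr.
rewrite addnS big_nat_recr ?leq_addr //.
apply: le_trans (lerD IH (lexx _)) _.
rewrite exprS mulrA divff ?pnatr_eq0 // mul1r.
have -> : 2 * 2^-1 ^+ (n + d) = 2^-1 ^+ (n + d) + 2^-1 ^+ (n + d) :> R.
  by rewrite mulr_natl mulr2n.
lra.
Qed.

Lemma pow_half_small (e : R) : 0 < e ->
  exists M : nat, forall m, (M <= m)%N -> 2 * (2^-1 : R) ^+ m < e.
Proof.
move=> e0; have b0 : 0 <= 2 / e by rewrite divr_ge0 // ltW.
exists (Num.bound (2 / e)) => m Mm.
have hb := archi_boundP b0.
have hm : 2 / e < m.+1%:R.
  apply: lt_le_trans hb _; rewrite ler_nat; exact: leqW.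
have hm2 : (m.+1%:R : R) <= (2 ^ m)%:R by rewrite ler_nat; apply: ltn_expl.
have E : (2^-1 : R) ^+ m = ((2 ^ m)%:R)^-1 by rewrite natrX exprVn.
rewrite E.
have p0 : (0 : R) < (2 ^ m)%:R by rewrite ltr0n expn_gt0.
have h1 : 2 / e < (2 ^ m)%:R := lt_le_trans hm hm2.
rewrite ltr_pdivrMr // in h1.
by rewrite ltr_pdivrMr // mulrC.
Qed.

End RealAux.

Section Banach.
Variables (k : fieldType) (A : algType k) (R : realType) (absk : k -> R) (N : A -> R).
Hypotheses (absN1 : absk (-1) = 1) (N0 : forall x, 0 <= N x)
  (Nz : forall x, N x = 0 <-> x = 0) (Ntri : forall x y, N (x + y) <= N x + N y)
  (NZ : forall (a : k) x, N (a *: x) = absk a * N x)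
  (Nmul : forall x y, N (x * y) <= N x * N y)
  (Ncomp : forall u : nat -> A,
         (forall e : R, 0 < e -> exists M, forall m n, (M <= m)%N -> (M <= n)%N ->
             N (u m - u n) < e) ->
         exists l : A, forall e : R, 0 < e -> exists M, forall n, (M <= n)%N ->
             N (u n - l) < e).

Lemma NN x : N (- x) = N x.
Proof. by rewrite -scaleN1r NZ absN1 mul1r. Qed.

Lemma Nsum (r : seq nat) (P : pred nat) (F : nat -> A) :
  N (\sum_(i <- r | P i) F i) <= \sum_(i <- r | P i) N (F i).
Proof.
elim: r => [|a r IH]; first by rewrite !big_nil (proj2 (Nz 0) erefl).
rewrite !big_cons; case: (P a) => //.
exact: le_trans (Ntri _ _) (lerD (lexx _) IH).
Qed.

Lemma Nsmall x : (forall e, 0 < e -> N x <= e) -> x = 0.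
Proof.
move=> H; apply/Nz; have n0 := N0 x.
case: (ltP 0 (N x)) => [p|np]; last by lra.
have := H (N x / 2) (divr_gt0 p (ltr0Sn _ 1)); lra.
Qed.

Lemma neumann y : N y <= 2^-1 -> isunit (1 - y).
Proof.
move=> hy.
pose S m := \sum_(0 <= j < m) y ^+ j.
have Npow j : N (y ^+ j.+1) <= N y ^+ j.+1.
  elim: j => [|j IH]; first by rewrite !expr1.
  rewrite exprSr [X in _ <= X]exprSr; apply: le_trans (Nmul _ _) _.
  by apply: ler_pM => //; apply: N0.
have powh j : N y ^+ j <= 2^-1 ^+ j.
  elim: j => [|j IH]; first by rewrite !expr0.
  by rewrite !exprS; apply: ler_pM (N0 y) (exprn_ge0 j (N0 y)) hy IH.
have Npowb j : (1 <= j)%N -> N (y ^+ j) <= 2^-1 ^+ j.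
  by case: j => // j _; exact: le_trans (Npow j) (powh _).
have Scauchy n m : (1 <= n)%N -> (n <= m)%N ->
    N (S m - S n) <= 2 * 2^-1 ^+ n - 2 * 2^-1 ^+ m.
  move=> n1 nm.
  have -> : S m - S n = \sum_(n <= j < m) y ^+ j.
    by rewrite /S (big_cat_nat (n := n)) //= addrC addrK.
  apply: le_trans (Nsum _ _ _) _; apply: le_trans (geo_tail R nm).
  by apply: ler_sum_nat => j /andP [nj _]; apply: Npowb; apply: leq_trans nj.
have hpos j : (0 : R) <= 2^-1 ^+ j by apply: exprn_ge0; rewrite invr_ge0.
have [l Hl] : exists l, forall e : R, 0 < e -> exists M, forall n, (M <= n)%N ->
             N (S n - l) < e.
  apply: Ncomp => e e0; have [M HM] := pow_half_small e0.
  exists M.+1 => m n Mm Mn.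
  have [nm|mn] := leqP n m.
    apply: le_lt_trans (Scauchy _ _ _ nm) _; first exact: leq_trans Mn.
    have := HM n (ltnW Mn); have := hpos m; lra.
  rewrite -NN opprB.
  apply: le_lt_trans (Scauchy _ _ _ (ltnW mn)) _; first exact: leq_trans Mm.
  have := HM m (ltnW Mm); have := hpos n; lra.
have tele m : (1 - y) * S m = 1 - y ^+ m /\ S m * (1 - y) = 1 - y ^+ m.
  elim: m => [|m [IH1 IH2]]; first by rewrite /S big_geq // mulr0 mul0r expr0 subrr.
  rewrite /S in IH1 IH2 *; rewrite big_nat_recr //=; split.
    by rewrite mulrDr IH1 mulrBl mul1r -exprS addrA subrK.
  by rewrite mulrDl IH2 mulrBr mulr1 -exprSr addrA subrK.
pose c := N (1 - y).
have c0 : 0 <= c by apply: N0.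
exists l; split.
  apply/eqP; rewrite -subr_eq0; apply/eqP; apply: Nsmall => e e0.
  pose e1 := e / (2 * (c + 1)).
  have e10 : 0 < e1 by rewrite divr_gt0 // mulr_gt0 // ltr_wpDl.
  have E1 : (c + 1) * e1 = e / 2 by rewrite /e1; field; lra.
  have [M1 HM1] := Hl _ e10; have [M2 HM2] := pow_half_small e0.
  pose m := maxn M1 M2.+1.
  have m1 : (M1 <= m)%N by rewrite leq_maxl.
  have m2 : (M2.+1 <= m)%N by rewrite leq_maxr.
  have -> : (1 - y) * l - 1 = (1 - y) * (l - S m) - y ^+ m.
    by rewrite mulrBr (tele m).1 -addrA -opprD subrK.
  apply: le_trans (Ntri _ _) _; rewrite NN.
  have h1 := Nmul (1 - y) (l - S m).
  have h2 : N (l - S m) < e1 by rewrite -NN opprB; apply: HM1.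
  have h3 : c * N (l - S m) <= c * e1 by apply: ler_wpM2l => //; apply: ltW.
  have h4 := Npowb m (leq_trans (ltn0Sn _) m2).
  have h5 := HM2 m (ltnW m2).
  rewrite -/c in h1; lra.
apply/eqP; rewrite -subr_eq0; apply/eqP; apply: Nsmall => e e0.
pose e1 := e / (2 * (c + 1)).
have e10 : 0 < e1 by rewrite divr_gt0 // mulr_gt0 // ltr_wpDl.
have E1 : (c + 1) * e1 = e / 2 by rewrite /e1; field; lra.
have [M1 HM1] := Hl _ e10; have [M2 HM2] := pow_half_small e0.
pose m := maxn M1 M2.+1.
have m1 : (M1 <= m)%N by rewrite leq_maxl.
have m2 : (M2.+1 <= m)%N by rewrite leq_maxr.
have -> : l * (1 - y) - 1 = (l - S m) * (1 - y) - y ^+ m.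
  by rewrite mulrBl (tele m).2 -addrA -opprD subrK.
apply: le_trans (Ntri _ _) _; rewrite NN.
have h1 := Nmul (l - S m) (1 - y).
have h2 : N (l - S m) < e1 by rewrite -NN opprB; apply: HM1.
have h3 : N (l - S m) * c <= e1 * c by apply: ler_wpM2r => //; apply: ltW.
have h4 := Npowb m (leq_trans (ltn0Sn _) m2).
have h5 := HM2 m (ltnW m2).
rewrite -/c in h1; lra.
Qed.

End Banach.

Lemma banach_shift (R : realType) (k : fieldType) (A : algType k) (absk : k -> R) :
  (forall eps : R, 0 < eps -> exists s, absk s = eps) ->
  @banach_norm k A R absk -> forall h : A, exists t : k, isunit (h + t%:A).
Proof.
move=> small' [N [[N0 Nz] Ntri NZ Nmul Ncomp]] h.
case: (eqVneq (1 : A) 0) => [A0|A1].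
  by exists 0, 0; rewrite mulr0 mul0r A0.
have n1 : 0 < N 1.
  rewrite lt_def N0 andbT; apply/negP => /eqP /Nz E; by rewrite E eqxx in A1.
have absN1 : absk (-1) = 1.
  have E : N 1 = absk (-1) * (absk (-1) * N 1).
    by rewrite -!NZ scalerA mulrNN mulr1 scale1r.
  have P : 0 <= absk (-1) * N 1 by rewrite -NZ N0.
  have P' : 0 <= absk (-1) by nra.
  nra.
have abs0 : absk 0 = 0.
  have : N ((0 : k) *: 1) = absk 0 * N 1 by rewrite NZ.
  rewrite scale0r (proj2 (Nz 0) erefl) => /esym /eqP; rewrite mulf_eq0 => /orP [/eqP //|].
  by rewrite gt_eqF.
have small : forall eps : R, 0 < eps -> exists s, s != 0 /\ absk s = eps.
  move=> eps e0; have [s As] := small' _ e0; exists s; split => //.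
  by apply: contraTneq e0 => s0; rewrite -As s0 abs0 ltxx.
pose eps := (2 * (N h + 1))^-1.
have nh0 := N0 h.
have eps0 : 0 < eps by rewrite invr_gt0 mulr_gt0 // ltr_wpDl.
have [s [s0 As]] := small _ eps0.
pose y := s *: h.
have hy : N y <= 2^-1.
  rewrite /y NZ As.
  have E : eps * (N h + 1) = 2^-1 by rewrite /eps; field; lra.
  have : eps * N h <= eps * (N h + 1) by apply: ler_wpM2l; [exact: ltW | lra].
  by rewrite E.
have [z [e1 e2]] := neumann absN1 N0 Nz Ntri NZ Nmul Ncomp hy.
pose t := - s^-1.
have t0 : t != 0 by rewrite oppr_eq0 invr_eq0.
have Eh : h + t%:A = t *: (1 - y).
  rewrite scalerBr /y scalerA /t mulNr mulVf // scaleN1r opprK addrC.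
  by [].
exists t; exists (t^-1 *: z); rewrite Eh; split.
  by rewrite -scalerAl -scalerAr e1 scalerA mulfV // scale1r.
by rewrite -scalerAl -scalerAr e2 scalerA mulVf // scale1r.
Qed.

Lemma unit_shift (R : realType) (k : fieldType) (A : algType k) :
  infinite_field k -> Hs A R -> forall h : A, exists t : k, isunit (h + t%:A).
Proof.
move=> inf [hf|[[f [[g fK gK] bn]]|[f [[g fK gK] bn]]]|hp].
- exact: findim_shift.
- apply: banach_shift bn.
  by move=> eps e0; exists (g eps); rewrite /= gK gtr0_norm.
- apply: banach_shift bn.
  move=> eps e0; exists (g (complex.Complex eps 0)).
  by rewrite /= gK /absC /= expr0n addr0 sqrtr_sqr gtr0_norm.
- exact: prod_shift.
Qed.

Theorem proposition5p2 (R : realType) (k : fieldType) (A : algType k)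
  (V : set A) (lambda : R) :
  infinite_field k -> Hs A R -> fdsub V -> meets_units V ->
  0 < lambda -> lambda <= 1 ->
  exists H : set A,
  [/\ (* (1) *) atom V lambda H /\ H 1 /\
        (forall H' : set A, atom V lambda H' -> H' 1 -> H' = H),
      (* (2) *) subalgebra H /\ Hl V `<=` H,
      (* (3) *) (forall X : set A, (atom V lambda X /\ meets_units X) <->
                   exists x : A, isunit x /\ X = [set x * h | h in H]) &
      (* (4) *) (forall W : set A, admissible W ->
                   lambda * (dimk W)%:R + (dimk V)%:R - lambda * (dimk H)%:R
                   <= (dimk (setmul W V))%:R)].
Proof.
move=> kinf hs fV uV l0 l1.
have [X atX] := atom_exists fV uV l1.
have [[[fX [x [Xx ux]]] cX] _] := atX.
have [y [xy yx]] := ux.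
have uy : isunit y by exists x.
pose H := [set y * h | h in X].
have atH : atom V lambda H := atom_tr fV uy atX.
have H1 : H 1 by exists x.
have Huniq : forall H', atom V lambda H' -> H' 1 -> H' = H.
  by move=> H' a h; apply: (atom_eq fV uV l1 a atH h H1 (@isunit1 k A)).
have [[[fH _] cH] minH] := atH.
have sH := subsp_fd fH.
have [_ kmin] := kappa_spec fV uV l1.
have fHV := setmul_fd fH fV.
exists H; split => //.
- split.
    case: (sH) => H0 HD HZ; split => // a b Ha Hb.
    have [t ut] := unit_shift kinf hs a.
    set u := a + t%:A.
    have Hu : H u by apply: HD => //; apply: HZ.
    have E : [set u * h | h in H] = H.
      apply: (atom_eq fV uV l1 (atom_tr fV ut atH) atH _ Hu ut).
      by exists 1 => //; rewrite mulr1.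
    have Hub : H (u * b) by rewrite -E; exists b.
    have -> : a * b = u * b - t *: b by rewrite /u mulrDl -scalerAl mul1r addrK.
    by apply: subsp_sub => //; apply: HZ.
  move=> h Hh.
  pose g := fun z : A => z * h.
  have fgH : fdsub (g @` H).
    case: (fH) => n [w Ew]; exists n, (g \o w).
    by rewrite Ew -lin_span ?image_comp //; apply: lin_right.
  pose K := Defs.span (H `|` g @` H).
  have [_ fK _] := dim_modular fH fgH.
  have aK : admissible K by split => //; exists 1; split; [apply: span_sub; left | apply: isunit1].
  have KV : setmul K V `<=` Defs.span (setmul H V).
    move=> _ [s [t [Ks [Vt ->]]]].
    have [a [b [Ha [c Hc <-] ->]]] := span_U_dec sH (subsp_fd fgH) Ks.
    rewrite mulrDl /g -mulrA; case: (subsp_span (setmul H V)) => _ D _; apply: D.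
      by apply: span_sub; exists a, t.
    by apply: span_sub; exists c, (h * t); split => //; split => //; apply: Hh.
  have dKV := dim_mono fHV KV.
  have kK := kmin _ aK.
  have hle : (dimk K <= dimk H)%N.
    rewrite -(ler_nat R) -(ler_pM2l l0).
    move: dKV; rewrite -(ler_nat R) => dKV.
    move: kK; rewrite -cH /Defs.conn => kK; lra.
  have EHK : H = K.
    apply: dim_eq_sub sH fK _ hle.
    by move=> z Hz; apply: span_sub; left.
  rewrite EHK; apply: span_sub; right; exists 1; [exact: H1 | exact: mul1r].
- move=> X'; split.
    move=> [atX' [z [X'z [z' [zz' z'z]]]]].
    have uz' : isunit z' by exists z.
    have EW : [set z' * h | h in X'] = H.
      apply: Huniq; first exact: (atom_tr fV uz' atX').
      by exists z.
    exists z; split; first by exists z'.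
    rewrite -EW image_comp; apply/seteqP; split => [a Xa|_ [a Xa <-]].
      by exists a => //=; rewrite mulrA zz' mul1r.
    by rewrite /= mulrA zz' mul1r.
  move=> [z [uz ->]]; split; first exact: atom_tr.
  by exists (z * 1); split; [exists 1 | rewrite mulr1].
- move=> W aW.
  have dV : (dimk V <= dimk (setmul H V))%N.
    apply: dim_mono fHV _ => v Vv; apply: span_sub; exists 1, v; by rewrite mul1r.
  have kW := kmin _ aW.
  move: kW; rewrite -cH /Defs.conn => kW.
  move: dV; rewrite -(ler_nat R) => dV.
  lra.
Qed.
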